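(* Consider the setting described in the context and suppose the stepsizes satisfy conditions (A) and (B), and either (C1) or (C2). Then the PDHG method converges in the residuals: $$\lim_{k\to\infty}\|P_k\|^2+\|D_k\|^2=0,$$ where $P_{k+1}=\frac{1}{\tau_k}(x_k-x_{k+1})-A^T(y_k-y_{k+1})$ and $D_{k+1}=\frac{1}{\sigma_k}(y_k-y_{k+1})-A(x_k-x_{k+1})$.
   Context: Let $A\in\mathbb{R}^{M\times N}$, let $f$ and $g$ be convex functions on $\mathbb{R}^N$ and $\mathbb{R}^M$, and let $X\subset\mathbb{R}^N$, $Y\subset\mathbb{R}^M$ be convex sets; consider the saddle-point problem $\min_{x\in X}\max_{y\in Y} f(x)+y^TAx-g(y)$. Let $\chi_C$ denote the characteristic function of a set $C$ ($0$ on $C$, $+\infty$ off $C$), and let $F=\partial(f+\chi_X)$, $G=\partial(g+\chi_Y)$. It is assumed that the problem is feasible (there is $u^\star=(x^\star,y^\star)$ with $0\in F(x^\star)+A^Ty^\star$, $0\in G(y^\star)-Ax^\star$) and that the minimizations below have solutions. The PDHG method with stepsizes $\tau_k,\sigma_k>0$ starts from $x_0,y_0$ and iterates $x_{k+1}=\arg\min_{x\in X} f(x)+\frac{1}{2\tau_k}\|x-(x_k-\tau_kA^Ty_k)\|^2$, $y_{k+1}=\arg\min_{y\in Y} g(y)+\frac{1}{2\sigma_k}\|y-(y_k+\sigma_kA(2x_{k+1}-x_k))\|^2$. (One has $P_{k+1}\in F(x_{k+1})+A^Ty_{k+1}$ and $D_{k+1}\in G(y_{k+1})-Ax_{k+1}$.)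 Write $u_k=(x_k,y_k)$, $M_k=\begin{pmatrix}\tau_k^{-1}I & -A^T\\ -A & \sigma_k^{-1}I\end{pmatrix}$, $H_k=\begin{pmatrix}\tau_k^{-1}I & 0\\ 0 & \sigma_k^{-1}I\end{pmatrix}$, and for a symmetric (possibly indefinite) matrix $M$, $\|u\|_M^2:=u^TMu$. Let $\phi_k=\max\{(\tau_k-\tau_{k+1})/\tau_k,\ (\sigma_k-\sigma_{k+1})/\sigma_k,\ 0\}$. Conditions: (A) the sequences $\{\tau_k\}$ and $\{\sigma_k\}$ are bounded; (B) $\sum_{k\ge0}\phi_k<C_\phi<\infty$ for some constant $C_\phi$; (C1) there is a constant $L$ with $\tau_k\sigma_k<L<\rho(A^TA)^{-1}$ for all $k>0$ ($\rho$ = spectral radius); (C2) either $X$ or $Y$ is bounded and there is $c\in(0,1)$ with $\|u_{k+1}-u_k\|_{M_k}^2\ge c\|u_{k+1}-u_k\|_{H_k}^2$ for all $k>0$. *)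

(* Defs.v *)
From HB Require Import structures.
From mathcomp Require Import all_boot all_order all_algebra.
From mathcomp Require Import all_classical all_reals all_analysis.
Set Implicit Arguments. Unset Strict Implicit. Unset Printing Implicit Defensive.
Import Order.TTheory GRing.Theory Num.Theory.
Local Open Scope ring_scope.
Local Open Scope classical_set_scope.

Definition sqnorm (R : realType) n (v : 'cV[R]_n) : R := (v^T *m v) 0 0.

(** Quadratic form u^T M u for a symmetric (possibly indefinite) M. *)
Definition qnorm (R : realType) n (Mx : 'M[R]_n) (u : 'cV[R]_n) : R :=
  (u^T *m Mx *m u) 0 0.

Definition convex_fun (R : realType) n (f : 'cV[R]_n -> R) : Prop :=
  forall x y (t : R), 0 <= t <= 1 ->
    f (t *: x + (1 - t) *: y) <= t * f x + (1 - t) * f y.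

(** v \in \partial (f + \chi_X)(x), unfolded. *)
Definition subgrad (R : realType) n (f : 'cV[R]_n -> R) (X : set 'cV[R]_n)
    (x v : 'cV[R]_n) : Prop :=
  X x /\ forall z, X z -> f x + (v^T *m (z - x)) 0 0 <= f z.

(** Spectral radius of A^T A (symmetric, so all its eigenvalues are real). *)
Definition rhoAtA (R : realType) m n (A : 'M[R]_(m, n)) : R :=
  sup [set `|a| | a in [set a : R | eigenvalue (A^T *m A) a]].

Definition Mmat (R : realType) m n (A : 'M[R]_(m, n)) (tau sigma : R)
  : 'M[R]_(n + m) :=
  block_mx (tau^-1 %:M) (- A^T) (- A) (sigma^-1 %:M).

Definition Hmat (R : realType) (n m : nat) (tau sigma : R) : 'M[R]_(n + m) :=
  block_mx (tau^-1 %:M) 0 0 (sigma^-1 %:M).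

Definition phi (R : realType) (tau sigma : nat -> R) (k : nat) : R :=
  Num.max ((tau k - tau k.+1) / tau k)
          (Num.max ((sigma k - sigma k.+1) / sigma k) 0).

Definition pdhg_iter (R : realType) m n (A : 'M[R]_(m, n))
    (f : 'cV[R]_n -> R) (g : 'cV[R]_m -> R)
    (X : set 'cV[R]_n) (Y : set 'cV[R]_m) (tau sigma : nat -> R)
    (x : nat -> 'cV[R]_n) (y : nat -> 'cV[R]_m) : Prop :=
  forall k,
    (X (x k.+1) /\ forall z, X z ->
       f (x k.+1) + (2 * tau k)^-1 * sqnorm (x k.+1 - (x k - tau k *: (A^T *m y k)))
       <= f z + (2 * tau k)^-1 * sqnorm (z - (x k - tau k *: (A^T *m y k)))) /\
    (Y (y k.+1) /\ forall z, Y z ->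
       g (y k.+1) + (2 * sigma k)^-1 *
          sqnorm (y k.+1 - (y k + sigma k *: (A *m (2 *: x k.+1 - x k))))
       <= g z + (2 * sigma k)^-1 *
          sqnorm (z - (y k + sigma k *: (A *m (2 *: x k.+1 - x k))))).

(** Residuals P_{k+1}, D_{k+1}. *)
Definition Pres (R : realType) m n (A : 'M[R]_(m, n)) (tau : nat -> R)
    (x : nat -> 'cV[R]_n) (y : nat -> 'cV[R]_m) (k : nat) : 'cV[R]_n :=
  (tau k)^-1 *: (x k - x k.+1) - A^T *m (y k - y k.+1).

Definition Dres (R : realType) m n (A : 'M[R]_(m, n)) (sigma : nat -> R)
    (x : nat -> 'cV[R]_n) (y : nat -> 'cV[R]_m) (k : nat) : 'cV[R]_m :=
  (sigma k)^-1 *: (y k - y k.+1) - A *m (x k - x k.+1).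

(* Main.v *)
Require Import Defs.
From HB Require Import structures.
From mathcomp Require Import all_boot all_order all_algebra.
From mathcomp Require Import all_classical all_reals all_analysis.
From mathcomp Require Import ring lra.
Set Implicit Arguments. Unset Strict Implicit. Unset Printing Implicit Defensive.
Import Order.TTheory GRing.Theory Num.Theory numFieldNormedType.Exports.
Local Open Scope ring_scope.
Local Open Scope classical_set_scope.

Section Dot.
Variable R : realType.
Lemma mul_self_ge0 (n:nat) (u : 'cV[R]_n) i : 0 <= u i 0 * u i 0.
Proof. by rewrite -expr2 sqr_ge0. Qed.

Definition dot n (u v : 'cV[R]_n) : R := (u^T *m v) 0 0.

Lemma dotE n (u v : 'cV[R]_n) : dot u v = \sum_i u i 0 * v i 0.
Proof. by rewrite /dot mxE; apply: eq_bigr => i _; rewrite mxE. Qed.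

Lemma sqnorm_dot n (u : 'cV[R]_n) : sqnorm u = dot u u.
Proof. by []. Qed.

Lemma dotC n (u v : 'cV[R]_n) : dot u v = dot v u.
Proof. by rewrite !dotE; apply: eq_bigr => i _; rewrite mulrC. Qed.

Lemma dotDl n (u w v : 'cV[R]_n) : dot (u + w) v = dot u v + dot w v.
Proof. by rewrite !dotE -big_split; apply: eq_bigr => i _; rewrite mxE mulrDl. Qed.

Lemma dotNl n (u v : 'cV[R]_n) : dot (- u) v = - dot u v.
Proof. by rewrite !dotE -sumrN; apply: eq_bigr => i _; rewrite mxE mulNr. Qed.

Lemma dotZl n a (u v : 'cV[R]_n) : dot (a *: u) v = a * dot u v.
Proof. by rewrite !dotE mulr_sumr; apply: eq_bigr => i _; rewrite mxE mulrA. Qed.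

Lemma dotBl n (u w v : 'cV[R]_n) : dot (u - w) v = dot u v - dot w v.
Proof. by rewrite dotDl dotNl. Qed.

Lemma dotDr n (u w v : 'cV[R]_n) : dot v (u + w) = dot v u + dot v w.
Proof. by rewrite dotC dotDl !(dotC v). Qed.
Lemma dotNr n (u v : 'cV[R]_n) : dot v (- u) = - dot v u.
Proof. by rewrite dotC dotNl dotC. Qed.
Lemma dotBr n (u w v : 'cV[R]_n) : dot v (u - w) = dot v u - dot v w.
Proof. by rewrite dotDr dotNr. Qed.
Lemma dotZr n a (u v : 'cV[R]_n) : dot v (a *: u) = a * dot v u.
Proof. by rewrite dotC dotZl dotC. Qed.

Lemma dot_trl m n (B : 'M[R]_(m, n)) (u : 'cV[R]_m) (v : 'cV[R]_n) :
  dot (B^T *m u) v = dot u (B *m v).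
Proof. by rewrite /dot trmx_mul trmxK mulmxA. Qed.

Lemma dot_trr m n (B : 'M[R]_(m, n)) (u : 'cV[R]_m) (v : 'cV[R]_n) :
  dot v (B^T *m u) = dot (B *m v) u.
Proof. by rewrite dotC dot_trl dotC. Qed.

Lemma sqnorm_ge0 n (u : 'cV[R]_n) : 0 <= sqnorm u.
Proof. rewrite sqnorm_dot dotE; apply: sumr_ge0 => i _; by rewrite -expr2 sqr_ge0. Qed.

Lemma sqnorm_eq0 n (u : 'cV[R]_n) : sqnorm u = 0 -> u = 0.
Proof.
rewrite sqnorm_dot dotE => /psumr_eq0P H; apply/matrixP => i j.
have {}H := H (fun i _ => mul_self_ge0 u i); rewrite (ord1 j) mxE.
by have /eqP := H i isT; rewrite mulf_eq0 orbb => /eqP.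
Qed.

Lemma quad_disc (p q r : R) : 0 <= r -> (forall t, 0 <= p + 2 * t * q + t ^+ 2 * r) ->
  q ^+ 2 <= p * r.
Proof.
move=> rge0 H; have hp : 0 <= p by have := H 0; rewrite !(mul0r, mulr0, expr0n) /= !addr0.
have [r0|r0] := ltP 0 r.
  have h := H (- q / r).
  have e : - q / r * r = - q by rewrite divfK ?gt_eqF.
  have : 0 <= r * (p + 2 * (- q / r) * q + (- q / r) ^+ 2 * r) by rewrite mulr_ge0 // ltW.
  have -> : r * (p + 2 * (-q/r) * q + (-q/r)^+2 * r) = p*r + 2 * (-q/r*r) * q + (-q/r*r)^+2 by ring.
  rewrite e => h2; nra.
have r00 : r = 0.
  lra.
subst r; case: (eqVneq q 0) => hq; first by rewrite hq expr0n mulr0.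
have := H (- (p + 1) / (2 * q)).
have -> : 2 * (- (p + 1) / (2 * q)) * q = - (p + 1) by field; rewrite hq.
rewrite mulr0 addr0; lra.
Qed.

Lemma sqnormD n (u v : 'cV[R]_n) :
  sqnorm (u + v) = sqnorm u + 2 * dot u v + sqnorm v.
Proof. rewrite !sqnorm_dot dotDl !dotDr (dotC v u); ring. Qed.

Lemma sqnormB n (u v : 'cV[R]_n) :
  sqnorm (u - v) = sqnorm u - 2 * dot u v + sqnorm v.
Proof. rewrite !sqnorm_dot dotBl !dotBr (dotC v u); ring. Qed.

Lemma sqnormZ n a (u : 'cV[R]_n) : sqnorm (a *: u) = a ^+ 2 * sqnorm u.
Proof. by rewrite !sqnorm_dot dotZl dotZr mulrA expr2. Qed.

Lemma sqnormN n (u : 'cV[R]_n) : sqnorm (- u) = sqnorm u.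
Proof. by rewrite !sqnorm_dot dotNl dotNr opprK. Qed.

Lemma CS n (u v : 'cV[R]_n) : dot u v ^+ 2 <= sqnorm u * sqnorm v.
Proof.
apply: quad_disc; first exact: sqnorm_ge0. move=> t; have := sqnorm_ge0 (u + t *: v).
by rewrite sqnormD sqnormZ dotZr; congr (_ <= _); ring.
Qed.

Lemma sqnormD_le n (u v : 'cV[R]_n) :
  sqnorm (u + v) <= 2 * sqnorm u + 2 * sqnorm v.
Proof. have := sqnorm_ge0 (u - v); rewrite sqnormB sqnormD; lra. Qed.

End Dot.

Section Prox.
Variable R : realType.

Lemma small_pos (a b : R) : 0 <= b -> (forall s, 0 < s -> s <= 1 -> 0 <= a + s * b) -> 0 <= a.
Proof.
move=> hb H; rewrite leNgt; apply/negP => ha.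
pose s := - a / (2 * (b - a)).
have hba : 0 < b - a by lra.
have hs : s * (2 * (b - a)) = - a by rewrite /s divfK // mulf_neq0 ?gt_eqF.
have s0 : 0 < s by rewrite /s divr_gt0 // ?mulr_gt0 //; lra.
have s1 : s <= 1.
  rewrite /s ler_pdivrMr ?mulr_gt0 //; lra.
have := H s s0 s1; clearbody s; nra.
Qed.

Lemma prox_vi n (f : 'cV[R]_n -> R) (X : set 'cV[R]_n) (c xp : 'cV[R]_n) (t : R) :
  convex_fun f -> convex_set X -> 0 < t -> X xp ->
  (forall z, X z -> f xp + (2 * t)^-1 * sqnorm (xp - c) <= f z + (2 * t)^-1 * sqnorm (z - c)) ->
  forall z, X z -> dot (t^-1 *: (c - xp)) (z - xp) <= f z - f xp.
Proof.
move=> cf cX t0 Xxp H z Xz.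
rewrite dotZl -opprB dotNl.
suff : 0 <= f z - f xp + t^-1 * dot (xp - c) (z - xp) by lra.
apply: (@small_pos _ ((2 * t)^-1 * sqnorm (z - xp))).
  by rewrite mulr_ge0 ?sqnorm_ge0 // invr_ge0 mulr_ge0 // ltW.
move=> s s0 s1.
have s0' : 0 <= s by exact: ltW.
pose l : {i01 R} := Itv01 s0' s1.
have Xzs : X (s *: z + (1 - s) *: xp).
  have := cX z xp l; rewrite !inE => /(_ Xz Xxp).
  by [].
have := H _ Xzs.
have -> : s *: z + (1 - s) *: xp - c = (xp - c) + s *: (z - xp).
  by apply/matrixP => i j; rewrite !mxE; ring.
rewrite (sqnormD (xp - c)) sqnormZ dotZr.
have hf := cf z xp s; rewrite s0' s1 /= in hf; have {}hf := hf isT.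
have ti : 0 < (2 * t)^-1 by rewrite invr_gt0 mulr_gt0.
have -> : (2 * t)^-1 = t^-1 / 2 by rewrite invfM mulrC.
move=> h.
have : 0 <= s * (f z - f xp + t^-1 * dot (xp - c) (z - xp) + s * (t^-1 / 2 * sqnorm (z - xp))).
  move: h hf; set F := f (s *: z + (1 - s) *: xp); set D := dot _ _; set S := sqnorm (z - xp);
  set E := sqnorm (xp - c); set T := t^-1 / 2; move=> h hf.
  have : 0 <= s * (f z - f xp) + T * (2 * s * D) + T * (s ^+ 2 * S) by nra.
  by congr (_ <= _); rewrite /T; field; rewrite gt_eqF.
set Y := (X in 0 <= s * X -> _); move=> hh; nra.
Qed.

End Prox.

Section Spec.
Variable R : realType.

Definition frob m n (B : 'M[R]_(m, n)) : R := \sum_i sqnorm (row i B)^T.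

Lemma frob_ge0 m n (B : 'M[R]_(m, n)) : 0 <= frob B.
Proof. by apply: sumr_ge0 => i _; apply: sqnorm_ge0. Qed.

Lemma mulmx_entry m n (B : 'M[R]_(m, n)) (a : 'cV[R]_n) i :
  (B *m a) i 0 = dot (row i B)^T a.
Proof. by rewrite mxE dotE; apply: eq_bigr => j _; rewrite !mxE. Qed.

Lemma frob_bound m n (B : 'M[R]_(m, n)) (a : 'cV[R]_n) :
  sqnorm (B *m a) <= frob B * sqnorm a.
Proof.
rewrite [X in X <= _]sqnorm_dot dotE /frob mulr_suml; apply: ler_sum => i _.
by rewrite mulmx_entry -expr2; apply: CS.
Qed.

Lemma dot_form_sym n (B : 'M[R]_n) (b c : 'cV[R]_n) : B^T = B ->
  dot c (B *m b) = dot b (B *m c).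
Proof. by move=> BT; rewrite -{1}BT dot_trr dotC. Qed.

Lemma form_CS n (B : 'M[R]_n) (b c : 'cV[R]_n) : B^T = B ->
  (forall u, 0 <= dot u (B *m u)) ->
  dot b (B *m c) ^+ 2 <= dot b (B *m b) * dot c (B *m c).
Proof.
move=> BT psd; apply: quad_disc; first exact: psd.
move=> t; have := psd (b + t *: c).
rewrite mulmxDr dotDl !dotDr -!scalemxAr !dotZr dotZl dotZl.
rewrite (dot_form_sym b c BT); congr (_ <= _); ring.
Qed.

Lemma spec_bound m n (A : 'M[R]_(m, n)) (a : 'cV[R]_n) :
  sqnorm (A *m a) <= rhoAtA A * sqnorm a.
Proof.
have [a0|apos] := eqVneq (sqnorm a) 0.
  by rewrite a0 (sqnorm_eq0 a0) mulmx0 mulr0 /sqnorm mulmx0 mxE.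
have apos' : 0 < sqnorm a by rewrite lt_def apos sqnorm_ge0.
set S := A^T *m A.
have qE : forall b, dot b (S *m b) = sqnorm (A *m b).
  by move=> b; rewrite /S -mulmxA dot_trr.
pose E := [set r | exists b, 0 < sqnorm b /\ r = sqnorm (A *m b) / sqnorm b].
have hE : has_sup E.
  split; first by exists (sqnorm (A *m a) / sqnorm a), a.
  exists (frob A) => r [b [bp ->]].
  by rewrite ler_pdivrMr // frob_bound.
set l := sup E.
have lb : forall b, sqnorm (A *m b) <= l * sqnorm b.
  move=> b; have [b0|bpos] := eqVneq (sqnorm b) 0.
    by rewrite b0 (sqnorm_eq0 b0) mulmx0 mulr0 /sqnorm mulmx0 mxE.
  have bpos' : 0 < sqnorm b by rewrite lt_def bpos sqnorm_ge0.
  rewrite -ler_pdivrMr //; apply: sup_upper_bound => //; by exists b.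
have l0 : 0 <= l.
  have h : E (sqnorm (A *m a) / sqnorm a) by exists a.
  apply: le_trans (sup_upper_bound hE h).
  by rewrite divr_ge0 ?sqnorm_ge0.
set B := l%:M - S.
have BT : B^T = B by rewrite /B linearB /= tr_scalar_mx /S trmx_mul trmxK.
have Bq : forall u, dot u (B *m u) = l * sqnorm u - sqnorm (A *m u).
  move=> u; rewrite /B mulmxBl dotBr mul_scalar_mx dotZr qE.
  by rewrite /sqnorm.
have psd : forall u, 0 <= dot u (B *m u) by move=> u; rewrite Bq subr_ge0.
have eig : eigenvalue S l.
  have : \det B == 0.
    apply: contraT => hdet.
    have Bu : B \in unitmx by rewrite unitmxE unitfE.
    set Bi := invmx B.
    pose F := frob Bi.
    pose eps := (F + 1)^-1.
    have F0 : 0 <= F by apply: frob_ge0.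
    have eps0 : 0 < eps by rewrite invr_gt0; lra.
    have [r [b [bp ->]] hr] := sup_adherent eps0 hE.
    set P := dot b (B *m b).
    have hP : P = sqnorm b * (l - sqnorm (A *m b) / sqnorm b).
      by rewrite /P Bq mulrBr mulrCA divff ?gt_eqF // mulr1 mulrC.
    set c := Bi *m b.
    have Bc : B *m c = b by rewrite /c mulmxA mulmxV // mul1mx.
    have h1 := form_CS b c BT psd.
    rewrite Bc -/P -(sqnorm_dot b) in h1.
    have h2 : dot c b ^+ 2 <= F * sqnorm b * sqnorm b.
      apply: le_trans (CS _ _) _; rewrite ler_wpM2r ?sqnorm_ge0 //.
      exact: frob_bound.
    have Pg : 0 <= P by apply: psd.
    move: hr; set r0 := sqnorm (A *m b) / sqnorm b => hr.
    set x := l - r0 in hP.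
    have hx : 0 <= x by rewrite hP in Pg; rewrite (pmulr_rge0 _ bp) in Pg.
    have hx2 : x < eps by rewrite /x -/l in hr *; lra.
    set d := dot c b in h1 h2.
    set s := sqnorm b in bp hP h1 h2.
    rewrite hP expr2 -mulrA in h1.
    have st1 : s <= x * d by rewrite -(ler_pM2l bp).
    have st2 : s ^+ 2 <= x ^+ 2 * d ^+ 2 by rewrite -exprMn; apply: lerXn2r; rewrite ?nnegrE; lra.
    have st3 : x ^+ 2 * d ^+ 2 <= x ^+ 2 * (F * s ^+ 2).
      by rewrite ler_wpM2l ?sqr_ge0 // expr2 mulrA.
    have st4 : 1 <= x ^+ 2 * F.
      have s2 : 0 < s ^+ 2 by rewrite exprn_gt0.
      rewrite -(ler_pM2r s2) mul1r -mulrA; exact: le_trans st2 st3.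
    have st5 : x ^+ 2 * F <= eps ^+ 2 * F.
      by rewrite ler_wpM2r // lerXn2r ?nnegrE //; lra.
    have st6 : eps ^+ 2 * F < 1.
      have e1 : eps * (F + 1) = 1 by rewrite /eps mulVf // gt_eqF //; lra.
      have e2 : eps ^+ 2 * (F + 1) ^+ 2 = 1 by rewrite -exprMn e1 expr1n.
      have e3 : F < (F + 1) ^+ 2 by nra.
      rewrite -e2 ltr_pM2l // exprn_gt0 //.
    lra.
  move/det0P => [v vn0 vB].
  apply/eigenvalueP; exists v => //.
  move: vB; rewrite /B mulmxBr mul_mx_scalar => /eqP; rewrite subr_eq0 => /eqP.
  by move=> ->.
have ST : S^T = S by rewrite /S trmx_mul trmxK.
have eb : forall e, eigenvalue S e -> 0 <= e <= l.
  move=> e /eigenvalueP [v vS vn0].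
  have uS : S *m v^T = e *: v^T by rewrite -{1}ST -trmx_mul vS linearZ.
  have un0 : 0 < sqnorm v^T.
    rewrite lt_def sqnorm_ge0 andbT; apply/negP => /eqP /sqnorm_eq0 h.
    by move: vn0; rewrite -[v]trmxK h linear0 eqxx.
  have := qE v^T; rewrite uS dotZr -sqnorm_dot => h.
  have := lb v^T; have := sqnorm_ge0 (A *m v^T); rewrite -h => h1 h2.
  apply/andP; split; first by rewrite -(pmulr_lge0 _ un0).
  by rewrite -(ler_pM2r un0).
apply: le_trans (lb a) _; rewrite ler_wpM2r ?sqnorm_ge0 //.
rewrite /rhoAtA -/S.
have hE' : has_sup [set `|e| | e in [set e | eigenvalue S e]].
  split; first by exists `|l|, l.
  exists l => y [e he <-]; have /andP[e0 el] := eb e he.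
  by rewrite ger0_norm.
have hm : [set `|e| | e in [set e | eigenvalue S e]] `|l| by exists l.
have := sup_upper_bound hE'; rewrite /ubound /= => /(_ _ hm).
by rewrite ger0_norm.
Qed.


End Spec.

Section Blk.
Variable R : realType.
Lemma entryD p q (X Y : 'M[R]_(p, q)) i j : (X + Y) i j = X i j + Y i j.
Proof. by rewrite mxE. Qed.

Lemma dotmxE n p (u : 'cV[R]_n) (B : 'M[R]_(n, p)) (v : 'cV[R]_p) :
  (u^T *m B *m v) 0 0 = dot u (B *m v).
Proof. by rewrite /dot mulmxA. Qed.

Lemma qnorm_M m n (A : 'M[R]_(m, n)) t s a b :
  qnorm (Mmat A t s) (col_mx a b) =
  t^-1 * sqnorm a + s^-1 * sqnorm b - 2 * dot (A *m a) b.
Proof.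
rewrite /qnorm /Mmat tr_col_mx mul_row_block mul_row_col !mulmxDl !entryD !dotmxE.
rewrite !mul_scalar_mx !mulNmx !dotZr !dotNr dot_trr dotC -!sqnorm_dot; ring.
Qed.

Lemma qnorm_H m n t s (a : 'cV[R]_n) (b : 'cV[R]_m) :
  qnorm (Hmat n m t s) (col_mx a b) = t^-1 * sqnorm a + s^-1 * sqnorm b.
Proof.
rewrite /qnorm /Hmat tr_col_mx mul_row_block mul_row_col !mulmxDl !entryD !dotmxE.
have d0 : forall k (u : 'cV[R]_k), dot u 0 = 0 by move=> k u; rewrite /dot mulmx0 mxE.
rewrite !mul_scalar_mx !mul0mx !dotZr !d0 -!sqnorm_dot; ring.
Qed.

End Blk.

Section Seq.
Variable R : realType.

Lemma sum_shift (u : nat -> R) n0 n :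
  \sum_(k < n0 + n) u k = \sum_(k < n0) u k + \sum_(j < n) u (n0 + j)%N.
Proof.
elim: n => [|n IH]; first by rewrite addn0 big_ord0 addr0.
by rewrite addnS !big_ord_recr /= IH addrA.
Qed.

Lemma tail_small (u : nat -> R) : (forall k, 0 <= u k) ->
  (exists C, forall n, \sum_(k < n) u k <= C) ->
  forall eps, 0 < eps -> exists n0, forall n, \sum_(j < n) u (n0 + j)%N < eps.
Proof.
move=> u0 [C hC] eps e0.
pose E := [set \sum_(k < n) u k | n in [set: nat]].
have hE : has_sup E.
  split; first by exists (\sum_(k < 0) u k), 0%N.
  by exists C => r [n _ <-].
have [r [n0 _ <-] hr] := sup_adherent e0 hE.
exists n0 => n.
have : \sum_(k < n0 + n) u k <= sup E.
  have h : E (\sum_(k < n0 + n) u k) by exists (n0 + n)%N.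
  by have := sup_upper_bound hE; rewrite /ubound /= => /(_ _ h).
rewrite sum_shift; lra.
Qed.

Lemma term_small (u : nat -> R) : (forall k, 0 <= u k) ->
  (exists C, forall n, \sum_(k < n) u k <= C) ->
  forall eps, 0 < eps -> exists n0, forall n, (n0 <= n)%N -> u n < eps.
Proof.
move=> u0 hC eps e0; have [n0 h] := tail_small u0 hC e0.
exists n0 => n hn; have := h (n - n0).+1.
rewrite big_ord_recr /= subnKC //.
have : 0 <= \sum_(i < n - n0) u (n0 + i)%N by apply: sumr_ge0.
lra.
Qed.

Lemma lyap (W q phi : nat -> R) (c : R) (K : nat) : 0 < c ->
  (forall k, (K <= k)%N -> 0 <= W k) -> (forall k, (K <= k)%N -> 0 <= q k) ->
  (forall k, 0 <= phi k) ->
  (forall k, (K <= k)%N -> W k.+1 <= (1 + c * phi k) * W k - q k) ->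
  (forall n, \sum_(j < n) phi (K + j)%N <= (2 * c)^-1) ->
  forall n, \sum_(j < n) q (K + j)%N <= 2 * W K.
Proof.
move=> c0 W0 q0 p0 rec tl.
have WK : 0 <= W K by apply: W0.
have inv : forall n, W (K + n)%N + \sum_(j < n) q (K + j)%N <=
    W K + 2 * c * W K * \sum_(j < n) phi (K + j)%N.
  elim=> [|n IH]; first by rewrite !big_ord0 addn0 !mulr0 !addr0.
  rewrite !big_ord_recr /= addnS.
  have hr := rec (K + n)%N (leq_addr _ _).
  have hq := q0 (K + n)%N (leq_addr _ _).
  have hW := W0 (K + n)%N (leq_addr _ _).
  have hp := p0 (K + n)%N.
  have ht := tl n.
  have hs : 0 <= \sum_(j < n) q (K + j)%N by apply: sumr_ge0 => j _; apply: q0; apply: leq_addr.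
  have hW2 : W (K + n)%N <= 2 * W K.
    have : 2 * c * W K * \sum_(j < n) phi (K + j)%N <= W K.
      have -> : 2 * c * W K * \sum_(j < n) phi (K + j)%N = W K * ((2 * c) * \sum_(j < n) phi (K + j)%N) by ring.
      rewrite ler_piMr // -(@ler_pM2l _ (2 * c)^-1) ?invr_gt0 ?mulr_gt0 //.
      by rewrite mulrA mulVf ?mul1r ?mulr1 // gt_eqF // mulr_gt0.
    lra.
  set Sq := \sum_(j < n) q (K + j)%N in IH hs *.
  set Sp := \sum_(j < n) phi (K + j)%N in IH ht *.
  set w := W (K + n)%N in hr hW hW2 IH *.
  set p := phi (K + n)%N in hr hp *.
  have : c * p * w <= c * p * (2 * W K) by rewrite ler_wpM2l // mulr_ge0 // ltW.
  nra.
move=> n; have := inv n; have := W0 (K + n)%N (leq_addr _ _).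
have ht := tl n.
have : 2 * c * W K * \sum_(j < n) phi (K + j)%N <= W K.
  have -> : 2 * c * W K * \sum_(j < n) phi (K + j)%N = W K * ((2 * c) * \sum_(j < n) phi (K + j)%N) by ring.
  rewrite ler_piMr // -(@ler_pM2l _ (2 * c)^-1) ?invr_gt0 ?mulr_gt0 //.
  by rewrite mulrA mulVf ?mul1r ?mulr1 // gt_eqF // mulr_gt0.
lra.
Qed.

End Seq.

Section Aux.
Variable R : realType.

Lemma entry_le n (z : 'cV[R]_n) i : `|z i 0| <= `|z|.
Proof.
rewrite [X in _ <= X]/Num.norm /= mx_normrE.
exact: (le_bigmax _ (fun ij : 'I_n * 'I_1 => `|z ij.1 ij.2|) (i, 0)).
Qed.

Lemma sqnorm_le_norm n (z : 'cV[R]_n) : sqnorm z <= n%:R * `|z| ^+ 2.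
Proof.
have -> : n%:R * `|z| ^+ 2 = \sum_(i < n) `|z| ^+ 2 by rewrite sumr_const card_ord mulr_natl.
rewrite sqnorm_dot dotE; apply: ler_sum => i _.
rewrite -expr2 -(real_normK (num_real (z i 0))) lerXn2r ?nnegrE //.
exact: entry_le.
Qed.

Lemma young n (p q : 'cV[R]_n) w : 0 < w ->
  2 * dot p q <= w * sqnorm p + w^-1 * sqnorm q.
Proof.
move=> w0; have := sqnorm_ge0 (w *: p - q); rewrite sqnormB sqnormZ dotZl => h.
have : 0 <= w^-1 * (w ^+ 2 * sqnorm p - 2 * (w * dot p q) + sqnorm q).
  by rewrite mulr_ge0 // invr_ge0 ltW.
have -> : w^-1 * (w ^+ 2 * sqnorm p - 2 * (w * dot p q) + sqnorm q) =
  w * sqnorm p - 2 * dot p q + w^-1 * sqnorm q by field; rewrite gt_eqF.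
lra.
Qed.

Definition Qf m n (A : 'M[R]_(m, n)) t s (a : 'cV[R]_n) (b : 'cV[R]_m) :=
  t^-1 * sqnorm a + s^-1 * sqnorm b - 2 * dot (A *m a) b.
Definition Hf m n t s (a : 'cV[R]_n) (b : 'cV[R]_m) :=
  t^-1 * sqnorm a + s^-1 * sqnorm b.

Lemma Hf_ge0 m n t s (a : 'cV[R]_n) (b : 'cV[R]_m) : 0 < t -> 0 < s -> 0 <= Hf t s a b.
Proof.
by move=> t0 s0; rewrite /Hf addr_ge0 // mulr_ge0 ?sqnorm_ge0 // invr_ge0 ltW.
Qed.

Lemma QfN m n (A : 'M[R]_(m, n)) t s a b : Qf A t s (- a) (- b) = Qf A t s a b.
Proof. by rewrite /Qf !sqnormN mulmxN dotNl dotNr opprK. Qed.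

Lemma HfN m n t s (a : 'cV[R]_n) (b : 'cV[R]_m) : Hf t s (- a) (- b) = Hf t s a b.
Proof. by rewrite /Hf !sqnormN. Qed.

Lemma Q_split m n (A : 'M[R]_(m, n)) t s a b da db :
  Qf A t s (a + da) (b + db) = Qf A t s a b + Qf A t s da db +
    2 * (dot (t^-1 *: da - A^T *m db) a + dot (s^-1 *: db - A *m da) b).
Proof.
rewrite /Qf !sqnormD mulmxDr !dotDl !dotDr ?dotBl !dotNl !dotZl dot_trl (dotC da a) (dotC db b).
rewrite (dotC (A *m a) db); ring.
Qed.

Lemma C1_bound m n (A : 'M[R]_(m, n)) t s a b L r :
  0 < t -> 0 < s -> t * s <= L -> 0 <= r ->
  sqnorm (A *m a) <= r * sqnorm a -> r * L < 1 ->
  (1 - r * L) / 2 * Hf t s a b <= Qf A t s a b.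
Proof.
move=> t0 s0 tsL r0 hZ th1.
have L0 : 0 < L by apply: lt_le_trans tsL; rewrite mulr_gt0.
set th := r * L in th1 *.
have th0 : 0 <= th by rewrite /th mulr_ge0 // ltW.
set T := (1 + th) / 2.
have T0 : 0 < T by rewrite /T divr_gt0 //; lra.
set w := s / T.
have w0 : 0 < w by rewrite /w divr_gt0.
have hy := young (A *m a) b w0.
have wi : w^-1 = T * s^-1 by rewrite /w invfM invrK mulrC.
rewrite wi in hy.
set X := sqnorm a in hZ *; set Y := sqnorm b in hy *.
set Z := sqnorm (A *m a) in hZ hy.
set D := dot (A *m a) b in hy *.
have X0 : 0 <= X by apply: sqnorm_ge0.
have Y0 : 0 <= Y by apply: sqnorm_ge0.
have ti0 : 0 < t^-1 by rewrite invr_gt0.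
have si0 : 0 < s^-1 by rewrite invr_gt0.
have f2 : w * Z <= w * (r * X) by rewrite ler_wpM2l // ltW.
have sr : s * r <= th * t^-1.
  have h : s * r * t <= th.
    have -> : s * r * t = r * (t * s) by ring.
    by rewrite /th ler_wpM2l.
  have -> : s * r = (s * r * t) * t^-1.
    by field; rewrite gt_eqF.
  by rewrite ler_wpM2r // invr_ge0 ltW.
have f3 : w * (r * X) <= th / T * (t^-1 * X).
  have -> : w * (r * X) = (s * r) / T * X by rewrite /w; field; rewrite gt_eqF.
  rewrite mulrA; apply: (ler_wpM2r X0); rewrite [X in _ <= X]mulrAC.
  have hT : 0 <= T^-1 by rewrite invr_ge0 ltW.
  exact: (ler_wpM2r hT sr).
set P1 := t^-1 * X in f3 *.
set P2 := s^-1 * Y.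
have P10 : 0 <= P1 by rewrite /P1 mulr_ge0 // ltW.
have c1 : 0 <= 1 - th / T - (1 - th) / 2.
  have -> : 1 - th / T - (1 - th) / 2 = (1 - th) * (1 - th) / (2 * (1 + th)).
    by rewrite /T; field; rewrite gt_eqF //; lra.
  by rewrite divr_ge0 // ?mulr_ge0 //; lra.
have hc := mulr_ge0 c1 P10.
have hT : T * P2 = (1 + th) / 2 * P2 by [].
rewrite /Hf -/P1 -/P2 /Qf -/X -/Y -/D -/P1 -/P2.
have e1 : T * s^-1 * Y = T * P2 by rewrite /P2 mulrA.
rewrite e1 in hy.
nra.
Qed.

Lemma C2x_bound m n (A : 'M[R]_(m, n)) t s a b Bd nA bx :
  0 < t -> 0 < s -> s <= Bd -> 0 <= nA ->
  sqnorm (A *m a) <= nA * sqnorm a -> sqnorm a <= bx ->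
  Hf t s a b <= 2 * Qf A t s a b + 4 * Bd * nA * bx.
Proof.
move=> t0 s0 sB nA0 hZ hX.
have w0 : 0 < 2 * s by rewrite mulr_gt0.
have hy := young (A *m a) b w0.
rewrite invfM in hy.
have Z0 := sqnorm_ge0 (A *m a).
have X0 := sqnorm_ge0 a.
have sZ : s * sqnorm (A *m a) <= Bd * nA * bx.
  have Bd0 : 0 <= Bd by apply: le_trans sB; apply: ltW.
  have h1 := ler_wpM2r Z0 sB.
  have h2 := le_trans hZ (ler_wpM2l nA0 hX).
  have h3 := ler_wpM2l Bd0 h2.
  by rewrite -mulrA; apply: le_trans h1 h3.
have tX : 0 <= t^-1 * sqnorm a by rewrite mulr_ge0 // invr_ge0 ltW.
rewrite /Hf /Qf.
set D := dot (A *m a) b in hy *.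
set Y := sqnorm b in hy *.
set P2 := s^-1 * Y.
have e : 2^-1 * s^-1 * Y = P2 / 2.
  by rewrite /P2 [RHS]mulrC mulrA.
rewrite e in hy.
set Z := sqnorm (A *m a) in sZ hy.
have e2 : 2 * s * Z = 2 * (s * Z) by rewrite mulrA.
rewrite e2 in hy.
lra.
Qed.

Lemma C2y_bound m n (A : 'M[R]_(m, n)) t s a b Bd nA bY :
  0 < t -> 0 < s -> t <= Bd -> 0 <= nA ->
  sqnorm (A^T *m b) <= nA * sqnorm b -> sqnorm b <= bY ->
  Hf t s a b <= 2 * Qf A t s a b + 4 * Bd * nA * bY.
Proof.
move=> t0 s0 tB nA0 hZ hY.
have -> : Qf A t s a b = s^-1 * sqnorm b + t^-1 * sqnorm a - 2 * dot (A^T *m b) a.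
  by rewrite /Qf dot_trl (dotC (A *m a)); ring.
have -> : Hf t s a b = s^-1 * sqnorm b + t^-1 * sqnorm a by rewrite /Hf addrC.
exact: (C2x_bound a s0 t0 tB nA0 hZ hY).
Qed.

End Aux.

Section Desc.
Variable R : realType.

Lemma descent (M N : nat) (A : 'M[R]_(M, N)) f g (X : set 'cV[R]_N) (Y : set 'cV[R]_M)
  tau sigma x y xs ys k :
  convex_fun f -> convex_fun g -> convex_set X -> convex_set Y ->
  subgrad f X xs (- (A^T *m ys)) -> subgrad g Y ys (A *m xs) ->
  0 < tau k -> 0 < sigma k -> pdhg_iter A f g X Y tau sigma x y ->
  0 <= dot (Pres A tau x y k) (x k.+1 - xs) + dot (Dres A sigma x y k) (y k.+1 - ys).
Proof.
move=> cf cg cX cY [Xxs hxs] [Yys hys] t0 s0 hpd.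
have [[Xx hx] [Yy hy]] := hpd k.
have vx := prox_vi cf cX t0 Xx hx Xxs.
have vy := prox_vi cg cY s0 Yy hy Yys.
have sx : f xs + dot (- (A^T *m ys)) (x k.+1 - xs) <= f (x k.+1) := hxs _ Xx.
have sy : g ys + dot (A *m xs) (y k.+1 - ys) <= g (y k.+1) := hys _ Yy.
have tn : tau k != 0 by rewrite gt_eqF.
have sn : sigma k != 0 by rewrite gt_eqF.
have ex : (tau k)^-1 *: (x k - tau k *: (A^T *m y k) - x k.+1) =
          Pres A tau x y k - A^T *m y k.+1.
  rewrite /Pres mulmxBr.
  move: (A^T *m y k) (A^T *m y k.+1) (x k) (x k.+1) => v1 v2 p1 p2.
  by apply/matrixP => i j; rewrite !mxE; field.
have ey : (sigma k)^-1 *: (y k + sigma k *: (A *m (2 *: x k.+1 - x k)) - y k.+1) =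
          Dres A sigma x y k + A *m x k.+1.
  rewrite /Dres !mulmxBr -scalemxAr.
  move: (A *m x k) (A *m x k.+1) (y k) (y k.+1) => v1 v2 p1 p2.
  by apply/matrixP => i j; rewrite !mxE; field.
rewrite ex -(opprB (x k.+1)) dotNr dotBl in vx.
rewrite ey -(opprB (y k.+1)) dotNr dotDl in vy.
rewrite dotNl in sx.
set wx := x k.+1 - xs in vx sx *.
set wy := y k.+1 - ys in vy sy *.
rewrite !dot_trl in vx sx.
have e1 : dot (y k.+1) (A *m wx) - dot ys (A *m wx) = dot (A *m wx) wy.
  by rewrite -dotBl dotC.
have e2 : dot (A *m x k.+1) wy - dot (A *m xs) wy = dot (A *m wx) wy.
  by rewrite -dotBl -mulmxBr.
lra.
Qed.

End Desc.

Section Final.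
Variable R : realType.

Lemma bnd n (X : set 'cV[R]_n) : bounded_set X -> exists M0, forall z, X z -> `|z| <= M0.
Proof. rewrite /= /bounded_near => h. have [M0 hM] := filter_ex h. exists M0 => z Xz. exact: hM. Qed.

Lemma bnd_sq n (X : set 'cV[R]_n) (xs : 'cV[R]_n) : bounded_set X ->
  exists b, 0 <= b /\ forall z, X z -> sqnorm (z - xs) <= b.
Proof.
move=> /bnd [M0 hM]; exists (n%:R * (Num.max M0 0 + `|xs|) ^+ 2); split.
  by rewrite mulr_ge0 ?sqr_ge0.
move=> z Xz; apply: le_trans (sqnorm_le_norm _) _.
have h0 : 0 <= Num.max M0 0 + `|xs| by rewrite addr_ge0 // le_max lexx orbT.
rewrite ler_wpM2l // lerXn2r ?nnegrE //.
apply: le_trans (ler_normB _ _) _; rewrite lerD2r.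
by apply: le_trans (hM _ Xz) _; rewrite le_max lexx.
Qed.

Lemma lower_step (t p : nat -> R) K : (forall k, 0 < t k) ->
  (forall k, (t k - t k.+1) / t k <= p k) -> (forall k, 0 <= p k) ->
  (forall n, \sum_(j < n) p (K + j)%N <= 2^-1) -> forall n, t K / 2 <= t (K + n)%N.
Proof.
move=> t0 tp p0 hs.
have inv : forall n, t K * (1 - \sum_(j < n) p (K + j)%N) <= t (K + n)%N.
  elim=> [|n IH]; first by rewrite big_ord0 subr0 mulr1 addn0.
  rewrite big_ord_recr /= addnS.
  have h1 : t (K + n)%N * (1 - p (K + n)%N) <= t (K + n).+1.
    have := tp (K + n)%N; rewrite ler_pdivrMr // => h; lra.
  have hp : p (K + n)%N <= 2^-1.
    have := hs n.+1; rewrite big_ord_recr /=.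
    have : 0 <= \sum_(i < n) p (K + i)%N by apply: sumr_ge0.
    lra.
  have hS := hs n.
  have hS0 : 0 <= \sum_(i < n) p (K + i)%N by apply: sumr_ge0.
  have h2 : t K * (1 - \sum_(i < n) p (K + i)%N) * (1 - p (K + n)%N) <=
            t (K + n)%N * (1 - p (K + n)%N).
    by apply: ler_wpM2r => //; lra.
  have h3 : 0 <= t K * ((\sum_(i < n) p (K + i)%N) * p (K + n)%N).
    by rewrite mulr_ge0 ?mulr_ge0 // ltW.
  set S := \sum_(i < n) p (K + i)%N in h2 h3 *.
  set q := p (K + n)%N in h1 h2 h3 *.
  have e : t K * (1 - (S + q)) = t K * (1 - S) * (1 - q) - t K * (S * q) by ring.
  rewrite e; lra.
move=> n; apply: le_trans (inv n); have := hs n; have := t0 K.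
set S := \sum_(j < n) p (K + j)%N => tK hS.
have : t K * S <= t K * 2^-1 by rewrite ler_wpM2l // ltW.
lra.
Qed.

End Final.

Unset Implicit Arguments.

Theorem mainTheorem6 (R : realType) (M N : nat) (A : 'M[R]_(M, N))
    (f : 'cV[R]_N -> R) (g : 'cV[R]_M -> R)
    (X : set 'cV[R]_N) (Y : set 'cV[R]_M)
    (tau sigma : nat -> R) (x : nat -> 'cV[R]_N) (y : nat -> 'cV[R]_M) :
  convex_fun f -> convex_fun g -> convex_set X -> convex_set Y ->
  (exists (xs : 'cV[R]_N) (ys : 'cV[R]_M),
     subgrad f X xs (- (A^T *m ys)) /\ subgrad g Y ys (A *m xs)) ->
  (forall k, 0 < tau k) -> (forall k, 0 < sigma k) ->
  pdhg_iter A f g X Y tau sigma x y ->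
  (* (A) *)
  (exists B : R, forall k, tau k <= B /\ sigma k <= B) ->
  (* (B) *)
  (exists Cphi : R, forall n, \sum_(k < n) phi tau sigma k < Cphi) ->
  (* (C1) or (C2) *)
  ((exists L : R, (forall k, (0 < k)%N -> tau k * sigma k < L) /\
                  L * rhoAtA A < 1)
   \/
   ((bounded_set X \/ bounded_set Y) /\
    exists c : R, 0 < c < 1 /\
      forall k, (0 < k)%N ->
        qnorm (Mmat A (tau k) (sigma k)) (col_mx (x k.+1 - x k) (y k.+1 - y k))
        >= c * qnorm (Hmat N M (tau k) (sigma k)) (col_mx (x k.+1 - x k) (y k.+1 - y k)))) ->
  (fun k => sqnorm (Pres A tau x y k) + sqnorm (Dres A sigma x y k)) @ \oo --> 0.
Proof.
move=> cf cg cX cY [xs [ys [hsx hsy]]] tau0 sig0 hpd [Bd hB] [Cphi hC] hcase.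
pose wx k := x k - xs. pose wy k := y k - ys.
pose dx k := x k - x k.+1. pose dy k := y k - y k.+1.
pose Qk k a b := Qf A (tau k) (sigma k) a b.
pose Hk k a b := @Hf R M N (tau k) (sigma k) a b.
pose V k := Qk k (wx k) (wy k).
pose ph k := phi tau sigma k.
have ph0 : forall k, 0 <= ph k.
  by move=> k; rewrite /ph /phi !le_max lexx !orbT.
have phtau : forall k, (tau k - tau k.+1) / tau k <= ph k.
  by move=> k; rewrite /ph /phi !le_max lexx.
have phsig : forall k, (sigma k - sigma k.+1) / sigma k <= ph k.
  by move=> k; rewrite /ph /phi !le_max lexx !orbT.
have Hk0 : forall k a b, 0 <= Hk k a b by move=> k a b; apply: Hf_ge0.
have Bd0 : 0 < Bd by apply: lt_le_trans (tau0 0%N) (hB 0%N).1.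
have desc : forall k, Qk k (wx k.+1) (wy k.+1) + Qk k (dx k) (dy k) <= V k.
  move=> k; have h := descent (k:=k) cf cg cX cY hsx hsy (tau0 k) (sig0 k) hpd.
  have h' : 0 <= dot ((tau k)^-1 *: dx k - A^T *m dy k) (wx k.+1) +
                 dot ((sigma k)^-1 *: dy k - A *m dx k) (wy k.+1) := h.
  have e : wx k = wx k.+1 + dx k by rewrite /wx /dx; apply/matrixP => i j; rewrite !mxE; ring.
  have e' : wy k = wy k.+1 + dy k by rewrite /wy /dy; apply/matrixP => i j; rewrite !mxE; ring.
  rewrite /V e e' /Qk Q_split; lra.
have inv_le : forall (t : nat -> R) k, (forall k, 0 < t k) ->
    (t k - t k.+1) / t k <= ph k -> (t k.+1)^-1 - (t k)^-1 <= ph k * (t k.+1)^-1.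
  move=> t k t0 h.
  have -> : (t k.+1)^-1 - (t k)^-1 = (t k - t k.+1) / t k * (t k.+1)^-1.
    by field; rewrite !gt_eqF.
  by apply: ler_wpM2r => //; rewrite invr_ge0 ltW.
have chg : forall k, V k.+1 <= Qk k (wx k.+1) (wy k.+1) + ph k * Hk k.+1 (wx k.+1) (wy k.+1).
  move=> k; rewrite /V /Qk /Hk /Qf /Hf.
  have i1 := inv_le tau k tau0 (phtau k).
  have i2 := inv_le sigma k sig0 (phsig k).
  have X0 := sqnorm_ge0 (wx k.+1); have Y0 := sqnorm_ge0 (wy k.+1).
  have j1 := ler_wpM2r X0 i1; have j2 := ler_wpM2r Y0 i2.
  set a := sqnorm (wx k.+1) in X0 j1 *; set b := sqnorm (wy k.+1) in Y0 j2 *.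
  set D := dot _ _.
  lra.
have hh : forall k a b, ph k <= 2^-1 -> Hk k.+1 a b <= 2 * Hk k a b.
  move=> k a b hp.
  have ti : forall (t : nat -> R), (forall k, 0 < t k) ->
      (t k - t k.+1) / t k <= ph k -> (t k.+1)^-1 <= 2 * (t k)^-1.
    move=> t t0 h.
    have h2 : t k <= 2 * t k.+1.
      have := le_trans h hp; rewrite ler_pdivrMr // => h3.
      have := t0 k; lra.
    rewrite -subr_ge0.
    have -> : 2 * (t k)^-1 - (t k.+1)^-1 = (2 * t k.+1 - t k) / (t k * t k.+1).
      by field; rewrite !gt_eqF.
    by rewrite divr_ge0 ?mulr_ge0 ?subr_ge0 // ltW.
  have i1 := ti tau tau0 (phtau k); have i2 := ti sigma sig0 (phsig k).
  have X0 := sqnorm_ge0 a; have Y0 := sqnorm_ge0 b.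
  have j1 := ler_wpM2r X0 i1; have j2 := ler_wpM2r Y0 i2.
  rewrite /Hk /Hf; lra.
have [al [be [ga [al0 [be0 [ga0 [HB HD]]]]]]] : exists al be ga : R,
    0 < al /\ 0 <= be /\ 0 < ga /\
   (forall k j, (0 < k)%N -> (0 < j)%N ->
      Hk k (wx j) (wy j) <= al * Qk k (wx j) (wy j) + be) /\
   (forall k, (0 < k)%N -> ga * Hk k (dx k) (dy k) <= Qk k (dx k) (dy k)).
  case: hcase => [[L [hL hLr]] | [hbd [c [c01 hc]]]].
  - have L0 : 0 < L by apply: lt_trans (hL 1%N isT); rewrite mulr_gt0.
    set r := Num.max (rhoAtA A) 0.
    have r0 : 0 <= r by rewrite le_max lexx orbT.
    have hr : forall a, sqnorm (A *m a) <= r * sqnorm a.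
      move=> a; apply: le_trans (spec_bound A a) _.
      by apply: ler_wpM2r; [exact: sqnorm_ge0 | rewrite le_max lexx].
    have rL : r * L < 1.
      case: (lerP 0 (rhoAtA A)) => h.
        by rewrite /r max_l // mulrC.
      by rewrite /r max_r ?ltW // mul0r.
    pose ga := (1 - r * L) / 2.
    have ga0 : 0 < ga by rewrite /ga divr_gt0 //; lra.
    have key : forall k a b, (0 < k)%N -> ga * Hk k a b <= Qk k a b.
      move=> k a b hk; apply: (@C1_bound R M N A (tau k) (sigma k) a b L r) => //.
      all: try exact: ltW (hL k hk).
      all: try exact: hr.
    exists ga^-1, 0, ga; split; first by rewrite invr_gt0.
    split; first by [].
    split; first by [].
    split; last by move=> k hk; apply: key.
    move=> k j hk hj; rewrite addr0; have := key k (wx j) (wy j) hk.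
    by move=> h; rewrite -(ler_pM2l ga0) mulrA mulfV ?gt_eqF // mul1r.
  - have /andP [c0 c1] := c01.
    have HD : forall k, (0 < k)%N -> c * Hk k (dx k) (dy k) <= Qk k (dx k) (dy k).
      move=> k hk; have := hc k hk.
      rewrite -[x k.+1 - x k]opprB -[y k.+1 - y k]opprB.
      have e1 : qnorm (Mmat A (tau k) (sigma k)) (col_mx (- dx k) (- dy k)) = Qk k (dx k) (dy k).
        by rewrite qnorm_M /Qk -(QfN A _ _ (dx k)).
      have e2 : qnorm (Hmat N M (tau k) (sigma k)) (col_mx (- dx k) (- dy k)) = Hk k (dx k) (dy k).
        by rewrite qnorm_H /Hk -(HfN _ _ (dx k)).
      by rewrite e1 e2.
    case: hbd => [bX | bY].
    + have [bx [bx0 hbx]] := bnd_sq xs bX.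
      exists 2, (4 * Bd * frob A * bx), c; split; first by [].
      split; first by rewrite !mulr_ge0 ?frob_ge0 // ltW.
      split; first by [].
      split; last by [].
      move=> k j hk hj.
      have Xj : X (x j) by have := (hpd j.-1).1.1; rewrite prednK.
      exact: (@C2x_bound R M N A (tau k) (sigma k) (wx j) (wy j) Bd (frob A) bx (tau0 k) (sig0 k) (hB k).2 (frob_ge0 A) (frob_bound A _) (hbx _ Xj)).
    + have [bx [bx0 hbx]] := bnd_sq ys bY.
      exists 2, (4 * Bd * frob A^T * bx), c; split; first by [].
      split; first by rewrite !mulr_ge0 ?frob_ge0 // ltW.
      split; first by [].
      split; last by [].
      move=> k j hk hj.
      have Yj : Y (y j) by have := (hpd j.-1).2.1; rewrite prednK.
      exact: (@C2y_bound R M N A (tau k) (sigma k) (wx j) (wy j) Bd (frob A^T) bx (tau0 k) (sig0 k) (hB k).1 (frob_ge0 A^T) (frob_bound A^T _) (hbx _ Yj)).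
pose eps := (4 * al + 2)^-1.
have eps0 : 0 < eps by rewrite invr_gt0; lra.
have epse : eps * (4 * al + 2) = 1 by rewrite mulVf // gt_eqF //; lra.
have epsh : eps <= 2^-1.
  rewrite -[X in _ <= X]div1r ler_pdivlMr //; nra.
have epsa : eps <= (2 * (2 * al))^-1.
  rewrite -[X in _ <= X]div1r ler_pdivlMr ?mulr_gt0 //; nra.
have [K0 hK0] : exists K0, forall n, \sum_(j < n) ph (K0 + j)%N < eps.
  apply: tail_small => //; exists Cphi => n; exact: ltW (hC n).
pose K := K0.+1.
have Kpos : (0 < K)%N by [].
have tailK : forall n, \sum_(j < n) ph (K + j)%N <= eps.
  move=> n; have := hK0 n.+1; rewrite big_ord_recl /=.
  have -> : \sum_(i < n) ph (K0 + bump 0 i)%N = \sum_(j < n) ph (K + j)%N.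
    by apply: eq_bigr => j _; rewrite /K /bump /= add1n addnS addSn.
  have := ph0 (K0 + 0)%N; lra.
have phK : forall k, (K <= k)%N -> ph k <= eps.
  move=> k hk; have := tailK (k - K).+1; rewrite big_ord_recr /= subnKC //.
  have : 0 <= \sum_(i < k - K) ph (K + i)%N by apply: sumr_ge0.
  lra.
have lowt := @lower_step R tau ph K tau0 phtau ph0 (fun n => le_trans (tailK n) epsh).
have lows := @lower_step R sigma ph K sig0 phsig ph0 (fun n => le_trans (tailK n) epsh).
pose W k := V k + be / al.
pose q k := Qk k (dx k) (dy k).
have Kk : forall k, (K <= k)%N -> (0 < k)%N by move=> k hk; apply: leq_trans Kpos hk.
have W0 : forall k, (K <= k)%N -> 0 <= W k.
  move=> k hk; have := HB k k (Kk k hk) (Kk k hk); have := Hk0 k (wx k) (wy k).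
  move=> h1 h2; have h4 : 0 <= al * V k + be := le_trans h1 h2.
  have h3 : 0 <= (al * V k + be) * al^-1.
    by apply: mulr_ge0 => //; rewrite invr_ge0 ltW.
  have -> : W k = (al * V k + be) * al^-1 by rewrite /W; field; rewrite gt_eqF.
  exact: h3.
have q0 : forall k, (K <= k)%N -> 0 <= q k.
  move=> k hk; apply: le_trans (HD k (Kk k hk)).
  by rewrite mulr_ge0 // ltW.
have rec : forall k, (K <= k)%N -> W k.+1 <= (1 + (2 * al) * ph k) * W k - q k.
  move=> k hk.
  have d := desc k; have c' := chg k.
  have h2 := hh k (wx k.+1) (wy k.+1) (le_trans (phK k hk) epsh).
  have hb := HB k k.+1 (Kk k hk) isT.
  have H1 := Hk0 k (wx k.+1) (wy k.+1).
  have qk := q0 k hk; have p0 := ph0 k.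
  rewrite -/(q k) in d.
  set q1 := Qk k (wx k.+1) (wy k.+1) in d c' hb.
  set H1' := Hk k.+1 (wx k.+1) (wy k.+1) in c' h2.
  set Hx := Hk k (wx k.+1) (wy k.+1) in h2 hb H1.
  have f1 : ph k * H1' <= ph k * (2 * Hx) by apply: ler_wpM2l.
  have f2 : ph k * (2 * Hx) <= ph k * (2 * (al * q1 + be)).
    by apply: ler_wpM2l => //; apply: ler_wpM2l.
  have f3 : 0 <= (2 * al * ph k) * (V k - q1).
    have vq : 0 <= V k - q1 by move: d; rewrite /V; lra.
    by apply: mulr_ge0 => //; apply: mulr_ge0 => //; apply: mulr_ge0 => //; apply: ltW.
  have f4 : al * ph k * (be / al) = ph k * be by field; rewrite gt_eqF.
  rewrite /W; nra.
have sumq := @lyap R W q ph (2 * al) K (mulr_gt0 (ltr0Sn _ 1) al0) W0 q0 ph0 rec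
  (fun n => le_trans (tailK n) epsa).
pose lo := Num.min (tau K) (sigma K) / 2.
have lo0 : 0 < lo.
  by rewrite /lo divr_gt0 // lt_min tau0 sig0.
have tlo : forall k, (K <= k)%N -> lo <= tau k.
  move=> k hk; have := lowt (k - K)%N; rewrite subnKC //; apply: le_trans.
  by apply: ler_wpM2r; [rewrite invr_ge0 | rewrite ge_min lexx].
have slo : forall k, (K <= k)%N -> lo <= sigma k.
  move=> k hk; have := lows (k - K)%N; rewrite subnKC //; apply: le_trans.
  by apply: ler_wpM2r; [rewrite invr_ge0 | rewrite ge_min lexx orbT].
pose fA := frob A. pose fT := frob A^T.
pose Cr := 2 * lo^-1 + 2 * (fA + fT) * Bd.
have Cr0 : 0 <= Cr.
  rewrite /Cr; apply: addr_ge0; first by rewrite mulr_ge0 // invr_ge0 ltW.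
  apply: mulr_ge0; last exact: ltW.
  by apply: mulr_ge0 => //; apply: addr_ge0; apply: frob_ge0.
have resb : forall k, (K <= k)%N ->
    sqnorm (Pres A tau x y k) + sqnorm (Dres A sigma x y k) <= Cr * Hk k (dx k) (dy k).
  move=> k hk.
  have hP : sqnorm (Pres A tau x y k) <=
      2 * ((tau k)^-1 ^+ 2 * sqnorm (dx k)) + 2 * sqnorm (A^T *m dy k).
    by apply: le_trans (sqnormD_le _ _) _; rewrite sqnormZ sqnormN.
  have hD : sqnorm (Dres A sigma x y k) <=
      2 * ((sigma k)^-1 ^+ 2 * sqnorm (dy k)) + 2 * sqnorm (A *m dx k).
    by apply: le_trans (sqnormD_le _ _) _; rewrite sqnormZ sqnormN.
  have t0 := tau0 k; have s0 := sig0 k.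
  have ti : (tau k)^-1 <= lo^-1 by rewrite lef_pV2 ?posrE // tlo.
  have si : (sigma k)^-1 <= lo^-1 by rewrite lef_pV2 ?posrE // slo.
  have X0 := sqnorm_ge0 (dx k); have Y0 := sqnorm_ge0 (dy k).
  set Xv := sqnorm (dx k) in hP X0 *; set Yv := sqnorm (dy k) in hD Y0 *.
  have tX : 0 <= (tau k)^-1 * Xv by rewrite mulr_ge0 // invr_ge0 ltW.
  have sY : 0 <= (sigma k)^-1 * Yv by rewrite mulr_ge0 // invr_ge0 ltW.
  have f1 : (tau k)^-1 ^+ 2 * Xv <= lo^-1 * ((tau k)^-1 * Xv).
    by rewrite expr2 -mulrA; apply: ler_wpM2r.
  have f2 : (sigma k)^-1 ^+ 2 * Yv <= lo^-1 * ((sigma k)^-1 * Yv).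
    by rewrite expr2 -mulrA; apply: ler_wpM2r.
  have f3' : Yv <= Bd * ((sigma k)^-1 * Yv).
    have e : Yv = sigma k * ((sigma k)^-1 * Yv) by rewrite mulrA mulfV ?mul1r // gt_eqF.
    by rewrite {1}e; apply: ler_wpM2r => //; exact: (hB k).2.
  have f3 : sqnorm (A^T *m dy k) <= fT * (Bd * ((sigma k)^-1 * Yv)).
    exact: le_trans (frob_bound _ _) (ler_wpM2l (frob_ge0 _) f3').
  have f4' : Xv <= Bd * ((tau k)^-1 * Xv).
    have e : Xv = tau k * ((tau k)^-1 * Xv) by rewrite mulrA mulfV ?mul1r // gt_eqF.
    by rewrite {1}e; apply: ler_wpM2r => //; exact: (hB k).1.
  have f4 : sqnorm (A *m dx k) <= fA * (Bd * ((tau k)^-1 * Xv)).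
    exact: le_trans (frob_bound _ _) (ler_wpM2l (frob_ge0 _) f4').
  have g1 : 0 <= fA * (Bd * ((sigma k)^-1 * Yv)).
    by apply: mulr_ge0; [exact: frob_ge0 | apply: mulr_ge0 => //; exact: ltW].
  have g2 : 0 <= fT * (Bd * ((tau k)^-1 * Xv)).
    by apply: mulr_ge0; [exact: frob_ge0 | apply: mulr_ge0 => //; exact: ltW].
  rewrite /Hk /Hf -/Xv -/Yv /Cr.
  set a1 := (tau k)^-1 * Xv in tX f1 f4 g2 *.
  set a2 := (sigma k)^-1 * Yv in sY f2 f3 g1 *.
  lra.
apply/cvgrPdist_le => e e0.
pose e' := e * ga / (Cr + 1).
have e'0 : 0 < e' by rewrite /e' divr_gt0 ?mulr_gt0 //; lra.
have [n0 hn0] := @term_small R (fun j => q (K + j)%N)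
  (fun j => q0 _ (leq_addr _ _)) (ex_intro _ (2 * W K) sumq) e' e'0.
exists (K + n0)%N => // k hk.
have hkK : (K <= k)%N by apply: leq_trans hk; apply: leq_addr.
rewrite sub0r normrN ger0_norm; last by rewrite addr_ge0 ?sqnorm_ge0.
have hn : (n0 <= k - K)%N by rewrite leq_subRL.
have hq := hn0 _ hn; rewrite /= subnKC // in hq.
have r1 := resb k hkK; have hd := HD k (Kk k hkK).
have H0 := Hk0 k (dx k) (dy k).
rewrite -/(q k) in hd.
set H := Hk k (dx k) (dy k) in r1 hd H0.
have h1 : ga * H * (Cr + 1) <= e' * (Cr + 1).
  by apply: ler_wpM2r; [lra | apply: ltW; apply: le_lt_trans hq].
have h2 : e' * (Cr + 1) = ga * e by rewrite /e'; field; rewrite gt_eqF //; lra.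
have h3 : H * (Cr + 1) <= e.
  by rewrite -(ler_pM2l ga0) mulrA -h2.
have h4 : Cr * H <= H * (Cr + 1) by nra.
lra.
Qed.
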